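(* Let $(S,d)$ be a metric space and let $P$ be a closed, proper, non-empty subset of $S$. Define $h_P(x)=\max\big(-1,\sup_{p\in P}[1-d(x,p)]\big)$ for $x\in S$. Then $h_P\in\operatorname{ext}(B^S_{\mathrm{FM}})$. If there exists $x\in S\setminus P$ with $d(x,P)<2$, then $h_P\in\operatorname{ext}_*(B^S_{\mathrm{FM}})$; otherwise $h_P$ is a trivial extreme point, i.e. $|h_P|=\mathbf{1}$.
   Context: $\mathrm{BL}(S)$ is the space of bounded real-valued Lipschitz functions on $S$, $|f|_L=\sup_{x\neq y}|f(x)-f(y)|/d(x,y)$, $\|f\|_{\mathrm{FM}}=\max(\|f\|_\infty,|f|_L)$, $B^S_{\mathrm{FM}}=\{f\in\mathrm{BL}(S):\|f\|_{\mathrm{FM}}\le1\}$, $\operatorname{ext}$ denotes extreme points, and $\operatorname{ext}_*(B^S_{\mathrm{FM}})=\operatorname{ext}(B^S_{\mathrm{FM}})\setminus\{f\in B^S_{\mathrm{FM}}:|f|=\mathbf{1}\}$. *)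

(* Defs.v *)
From HB Require Import structures.
From mathcomp Require Import all_boot all_order all_algebra.
From mathcomp Require Import boolp classical_sets reals.
Set Implicit Arguments. Unset Strict Implicit. Unset Printing Implicit Defensive.
Import Order.TTheory GRing.Theory Num.Theory.
Local Open Scope ring_scope.
Local Open Scope classical_set_scope.

Definition is_metric (R : realType) (S : Type) (d : S -> S -> R) : Prop :=
  (forall x y, d x y = 0 <-> x = y) /\
  (forall x y, d x y = d y x) /\
  (forall x y z, d x z <= d x y + d y z).

Definition metric_closed (R : realType) (S : Type) (d : S -> S -> R) (P : set S) : Prop :=
  forall x, (forall e : R, 0 < e -> exists2 p, P p & d x p < e) -> P x.

Definition dist_set (R : realType) (S : Type) (d : S -> S -> R) (P : set S) (x : S) : R :=
  inf [set d x p | p in P].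

Definition hP (R : realType) (S : Type) (d : S -> S -> R) (P : set S) (x : S) : R :=
  Num.max (-1) (sup [set 1 - d x p | p in P]).

(* f in B_FM^S : f is real-valued on S with ||f||_FM = max(||f||_inf, |f|_L) <= 1,
   i.e. sup |f| <= 1 and sup_{x<>y} |f x - f y| / d(x,y) <= 1 *)
Definition in_BFM (R : realType) (S : Type) (d : S -> S -> R) (f : S -> R) : Prop :=
  (forall x, `|f x| <= 1) /\
  (forall x y, x <> y -> `|f x - f y| / d x y <= 1).

Definition is_ext_BFM (R : realType) (S : Type) (d : S -> S -> R) (f : S -> R) : Prop :=
  in_BFM d f /\
  forall (g h : S -> R) (t : R), in_BFM d g -> in_BFM d h -> 0 < t < 1 ->
    f = (fun x => t * g x + (1 - t) * h x) -> g = f /\ h = f.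

Definition is_ext_star_BFM (R : realType) (S : Type) (d : S -> S -> R) (f : S -> R) : Prop :=
  is_ext_BFM d f /\ (fun x => `|f x|) <> (fun _ => 1).

(* Main.v *)
Require Import Defs.
From HB Require Import structures.
From mathcomp Require Import all_boot all_order all_algebra.
From mathcomp Require Import boolp classical_sets reals.
From mathcomp Require Import lra.
Import Order.TTheory GRing.Theory Num.Theory.
Local Open Scope ring_scope.
Local Open Scope classical_set_scope.

Section Aux.
Variables (R : realType) (S : Type) (d : S -> S -> R) (P : set S).
Hypothesis hd : is_metric d.
Hypothesis hPne : P !=set0.

Let sP x := sup [set 1 - d x p | p in P].

Lemma d0 x : d x x = 0.
Proof. by case: hd => h _; apply/h. Qed.

Lemma dge0 x y : 0 <= d x y.
Proof.
case: hd => _ [hs ht]; have := ht x y x; rewrite d0 (hs y x) => h.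
have : 0 <= d x y + d x y by []. lra.
Qed.

Lemma dgt0 x y : x <> y -> 0 < d x y.
Proof.
move=> xy; rewrite lt_neqAle dge0 andbT; apply/eqP => h.
by case: hd => H _; apply: xy; apply/H.
Qed.

Lemma sP_ub x : has_ubound [set 1 - d x p | p in P].
Proof. exists 1 => _ [p _ <-]; have := dge0 x p; lra. Qed.

Lemma sP_ne x : [set 1 - d x p | p in P] !=set0.
Proof. by case: hPne => p Pp; exists (1 - d x p), p. Qed.

Lemma sP_ge x p : P p -> 1 - d x p <= sP x.
Proof. by move=> Pp; apply: (ub_le_sup (sP_ub x)); exists p. Qed.

Lemma sP_le x c : (forall p, P p -> 1 - d x p <= c) -> sP x <= c.
Proof. by move=> h; apply: ge_sup; [exact: sP_ne|move=> _ [p Pp <-]; exact: h]. Qed.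

Lemma sP_lip x y : sP x <= sP y + d x y.
Proof.
apply: sP_le => p Pp; have := sP_ge y p Pp.
case: hd => _ [hs ht]; have := ht y x p; rewrite (hs y x); lra.
Qed.

Lemma hP_eq x : hP d P x = Num.max (-1) (sP x).
Proof. by []. Qed.

End Aux.
Arguments d0 {R S d}. Arguments dge0 {R S d}. Arguments dgt0 {R S d}.
Arguments sP_ub {R S d P}. Arguments sP_ne {R S d P}. Arguments sP_ge {R S d P}.
Arguments sP_le {R S d P}. Arguments sP_lip {R S d P}.

Lemma max_lip (R : realType) (a b : R) :
  `|Num.max (-1) a - Num.max (-1) b| <= `|a - b|.
Proof.
case: (lerP (-1) a) => ha; case: (lerP (-1) b) => hb;
  rewrite ?(max_r ha) ?(max_r hb) ?(max_l (ltW ha)) ?(max_l (ltW hb)).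
- by [].
- rewrite (ger0_norm (_ : 0 <= a - -1)); last lra.
  rewrite (ger0_norm (_ : 0 <= a - b)); lra.
- rewrite (ler0_norm (_ : -1 - b <= 0)); last lra.
  rewrite (ler0_norm (_ : a - b <= 0)); lra.
- by rewrite subrr normr0.
Qed.

Theorem lemmaC2 (R : realType) (S : Type) (d : S -> S -> R) (P : set S)
  (hd : is_metric d) (hPc : metric_closed d P) (hPprop : P <> setT) (hPne : P !=set0) :
  is_ext_BFM d (hP d P) /\
  ((exists x, ~ P x /\ dist_set d P x < 2) -> is_ext_star_BFM d (hP d P)) /\
  (~ (exists x, ~ P x /\ dist_set d P x < 2) -> (fun x => `|hP d P x|) = (fun _ => 1)).
Proof.
set s := fun x => sup [set 1 - d x p | p in P].
have hPE : forall x, hP d P x = Num.max (-1) (s x) by [].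
have sle1 : forall x, s x <= 1.
  move=> x; apply: (sP_le hPne) => p _; have := dge0 hd x p; lra.
have hP1 : forall p, P p -> hP d P p = 1.
  move=> p Pp; rewrite hPE; have := sP_ge hd p p Pp; rewrite d0 //.
  have := sle1 p; rewrite /s => h1 h2.
  have -> : sup [set 1 - d p p0 | p0 in P] = 1 by apply/eqP; rewrite eq_le h1; lra.
  by rewrite max_r //; lra.
have inB : in_BFM d (hP d P).
  split.
    move=> x; rewrite hPE ler_norml; have := sle1 x.
    case: (lerP (-1) (s x)) => h; rewrite ?(max_r h) ?(max_l (ltW h)); lra.
  move=> x y xy; have dp := dgt0 hd x y xy.
  rewrite ler_pdivrMr // mul1r !hPE; apply: (le_trans (max_lip _ _ _)).
  have := sP_lip hd hPne x y; have := sP_lip hd hPne y x.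
  case: hd => _ [hs _]; rewrite (hs y x) /s => h1 h2.
  rewrite ler_norml; lra.
have ext : is_ext_BFM d (hP d P).
  split => // g k t [gb gl] [kb kl] /andP[t0 t1] hE.
  have g1 : forall f, (forall x, `|f x| <= 1) -> (forall x y, x <> y -> `|f x - f y| / d x y <= 1) ->
      (forall p, P p -> f p = 1) -> forall x, hP d P x <= f x.
    move=> f fb fl fP x; rewrite hPE ge_max; apply/andP; split.
      by have := fb x; rewrite ler_norml => /andP[].
    apply: (sP_le hPne) => p Pp.
    have [->|xp] := pselect (x = p); first by rewrite d0 // fP //; lra.
    have := fl x p xp; rewrite ler_pdivrMr ?(dgt0 hd x p xp) // mul1r (fP p Pp) ler_norml.
    lra.

  have gP : forall p, P p -> g p = 1 /\ k p = 1.
    move=> p Pp; have := congr1 (fun f => f p) hE; rewrite /= hP1 //.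
    have := gb p; have := kb p; rewrite !ler_norml => /andP[_ k1] /andP[_ g1'] e.
    split; nra.
  have Hg := g1 g gb gl (fun p Pp => (gP p Pp).1).
  have Hk := g1 k kb kl (fun p Pp => (gP p Pp).2).
  split; apply/funext => x; have := congr1 (fun f => f x) hE => /= e;
    have := Hg x; have := Hk x; nra.
have dne : forall x, [set d x p | p in P] !=set0.
  by move=> x; case: hPne => p Pp; exists (d x p), p.
split => //; split.
  move=> [x [nPx hx]]; split => // habs.
  have [e [e0 he]] : exists e, 0 < e /\ forall p, P p -> e <= d x p.
    case: (pselect (exists e, 0 < e /\ forall p, P p -> e <= d x p)) => // H.
    exfalso; apply: nPx; apply: hPc => e e0.
    case: (pselect (exists2 p, P p & d x p < e)) => // nh; exfalso; apply: H.
    exists e; split => // p Pp; rewrite leNgt; apply/negP => lt; apply: nh; exists p => //.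
  have sxe : s x <= 1 - e by apply: (sP_le hPne) => p Pp; have := he p Pp; lra.
  have [_ [p Pp <-] dp2] := inf_lt (dne x) hx.
  have := sP_ge hd x p Pp; rewrite -/(s x) => sxp.
  have := congr1 (fun f => f x) habs; rewrite /= hPE max_r; last lra.
  case: (lerP 0 (s x)) => h0; [rewrite ger0_norm // | rewrite ltr0_norm //]; lra.
move=> NH; apply/funext => x /=.
case: (pselect (P x)) => Px; first by rewrite hP1 // normr1.
have hx : 2 <= dist_set d P x.
  by rewrite leNgt; apply/negP => h; apply: NH; exists x.
have lb : lbound [set d x p | p in P] (dist_set d P x).
  apply: ge_inf; exists 0 => _ [p _ <-]; exact: dge0 hd x p.
have : s x <= -1.
  apply: (sP_le hPne) => p Pp; have := lb _ (ex_intro2 _ _ p Pp erefl); lra.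
move=> sx; rewrite hPE max_l // normrN normr1 //.
Qed.
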